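(* Let $p \in (0,1]$, let $s = 1/p \geq 1$, and let $q = 1-p$. For integers $1 \le n \le s$ define $$x_n = \sum_{k=1}^n\binom{n}{k}(-1)^{k+1}\frac{1}{1-q^k}, \qquad y_n = \sum_{k=1}^n\binom{n}{k}(-1)^{k+1}\frac{1+q^k}{(1-q^k)^2}$$ (these are $\mathbb{E}(Y_n^s)$ and $\mathbb{E}((Y_n^s)^2)$ where $Y_n^s$ is the maximum of $n$ independent geometric random variables on $\{1,2,\dots\}$ with parameter $p$). Then $y_1 = (2-p)/p^2$, and for every integer $n$ with $1 < n \le s$, $$y_n \;=\; \frac{\sum_{i=1}^{n-1}\binom{n}{i} p^i (1 - p)^{n - i}\, y_{n-i} \;-\; 1 \;+\; 2x_n}{1- (1 - p)^{n}}.$$ That is, the sequence $(y_n)$ is the solution of this recurrence with initial value $(2-p)/p^2$.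
   Context: A geometric random variable with parameter $p$ on $\{1,2,\dots\}$ has $\mathbb{P}(Z=m)=(1-p)^{m-1}p$ for $m\ge1$. *)

(* Defs.v *)
From mathcomp Require Import all_boot all_order all_algebra.
Set Implicit Arguments. Unset Strict Implicit. Unset Printing Implicit Defensive.
Import Order.TTheory GRing.Theory Num.Theory.
Local Open Scope ring_scope.

Definition xseq {R : realFieldType} (p : R) (n : nat) : R :=
  \sum_(1 <= k < n.+1) ('C(n, k))%:R * (-1) ^+ k.+1 / (1 - (1 - p) ^+ k).

Definition yseq {R : realFieldType} (p : R) (n : nat) : R :=
  \sum_(1 <= k < n.+1) ('C(n, k))%:R * (-1) ^+ k.+1
     * (1 + (1 - p) ^+ k) / (1 - (1 - p) ^+ k) ^+ 2.

(* Main.v *)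
Require Import Defs.
From mathcomp Require Import all_boot all_order all_algebra.
From mathcomp Require Import zify ring lra.
Set Implicit Arguments. Unset Strict Implicit. Unset Printing Implicit Defensive.
Import Order.TTheory GRing.Theory Num.Theory.
Local Open Scope ring_scope.
Lemma binM n i k : ('C(n,i) * 'C(n-i,k) = 'C(n,k) * 'C(n-k,i))%N.
Proof.
case: (leqP (i+k) n) => H.
- have c0 : (0 < i`! * k`! * (n-i-k)`!)%N by rewrite !muln_gt0 !fact_gt0.
  apply/eqP; rewrite -(eqn_pmul2r c0); apply/eqP.
  have E1 := @bin_fact n i. have E2 := @bin_fact (n-i) k.
  have E3 := @bin_fact n k. have E4 := @bin_fact (n-k) i.
  rewrite (_ : (n - k - i = n - i - k)%N) in E4; last lia.
  have L : ('C(n, i) * 'C(n - i, k) * (i`! * k`! * (n - i - k)`!) = n`!)%N.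
    rewrite -E1; last lia. rewrite -E2; last lia. ring.
  have R : ('C(n, k) * 'C(n - k, i) * (i`! * k`! * (n - i - k)`!) = n`!)%N.
    rewrite -E3; last lia. rewrite -E4; last lia. ring.
  by rewrite L R.
- case: (leqP i n) => Hi.
  + rewrite (@bin_small (n-i) k); last lia.
    case: (leqP k n) => Hk.
    * by rewrite (@bin_small (n-k) i) ?muln0 //; lia.
    * by rewrite muln0 (@bin_small n k).
  + rewrite (@bin_small n i) //. case: (leqP k n) => Hk.
    * by rewrite (@bin_small (n-k) i) ?muln0 //; lia.
    * by rewrite (@bin_small n k).
Qed.

Lemma Bk (R : comRingType) (p : R) n k : (k <= n)%N ->
  \sum_(i < n.+1) ('C(n,i))%:R * p^+i * (1-p)^+(n-i) * ('C(n-i,k))%:R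
  = ('C(n,k))%:R * (1-p)^+k.
Proof.
move=> kn.
transitivity (('C(n,k))%:R * \sum_(0 <= i < n.+1) ('C(n-k,i))%:R * p^+i * (1-p)^+(n-i) : R).
  rewrite big_mkord mulr_sumr; apply: eq_bigr => i _.
  have E := congr1 (fun m => m%:R : R) (binM n i k); rewrite /= !natrM in E.
  transitivity (('C(n, i))%:R * ('C(n - i, k))%:R * (p ^+ i * (1 - p) ^+ (n - i)) : R); first ring.
  rewrite E; ring.
congr (_ * _).
rewrite (@big_cat_nat _ _ _ (n-k).+1) //=; last lia.
rewrite [X in _ + X]big1_seq ?addr0; last first.
  move=> i /andP[_]; rewrite mem_index_iota => /andP[H _].
  by rewrite bin_small // mul0r !mul0r.
transitivity (\sum_(0 <= i < (n-k).+1) (1-p)^+k * (((1-p)^+((n-k)-i) * p^+i) *+ 'C(n-k,i))).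
  rewrite big_nat_cond [RHS]big_nat_cond; apply: eq_bigr => i /andP[/andP[_ H] _].
  rewrite (_ : (n - i = k + (n-k-i))%N); last lia.
  rewrite exprD -mulr_natl; ring.
by rewrite -mulr_sumr big_mkord -exprDn subrK !expr1n mulr1.
Qed.

Definition S (R : comRingType) n (g : nat -> R) : R :=
  \sum_(1 <= k < n.+1) ('C(n,k))%:R * (-1)^+k.+1 * g k.

Lemma Swiden (R : comRingType) m n (g : nat -> R) : (m <= n)%N ->
  S m g = \sum_(1 <= k < n.+1) ('C(m,k))%:R * (-1)^+k.+1 * g k.
Proof.
move=> mn; rewrite /S (@big_cat_nat _ _ _ m.+1 1 n.+1) //=.
rewrite [X in _ + X]big1_seq ?addr0 //.
move=> i /andP[_]; rewrite mem_index_iota => /andP[H _].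
by rewrite bin_small // !mul0r.
Qed.

Lemma mainS (R : comRingType) (p : R) n g :
  \sum_(i < n.+1) ('C(n,i))%:R * p^+i * (1-p)^+(n-i) * S (n-i) g
  = S n (fun k => (1-p)^+k * g k).
Proof.
under eq_bigr => i _ do rewrite (@Swiden _ (n-i) n) ?leq_subr // mulr_sumr.
rewrite exchange_big /S big_nat_cond [RHS]big_nat_cond.
apply: eq_bigr => k /andP[/andP[k1 kn] _].
transitivity ((\sum_(i < n.+1) ('C(n,i))%:R * p^+i * (1-p)^+(n-i) * ('C(n-i,k))%:R) * ((-1)^+k.+1 * g k)).
  rewrite mulr_suml; apply: eq_bigr => i _; ring.
rewrite Bk //; ring.
Qed.

Lemma S1 (R : comRingType) n : (0 < n)%N -> S n (fun _ => 1 : R) = 1.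
Proof.
move=> n0.
have := exprDn (1:R) (-1) n; rewrite subrr expr0n (negbTE (lt0n_neq0 n0)).
rewrite big_ord_recl /= subn0 expr1n expr0 mulr1 bin0 => /eqP.
rewrite eq_sym addr_eq0 => /eqP E.
rewrite /S big_add1 /= big_mkord.
apply: (eq_trans _ (esym E)); rewrite -sumrN; apply: eq_bigr => i _.
by rewrite /bump /= add1n expr1n mul1r mulr1 -mulr_natl (exprS _ i.+1); ring.
Qed.

Lemma S_ext (R : comRingType) n (f g : nat -> R) :
  (forall k, (1 <= k <= n)%N -> f k = g k) -> S n f = S n g.
Proof.
move=> H; rewrite /S big_nat_cond [RHS]big_nat_cond.
by apply: eq_bigr => k /andP[/andP[a b] _]; rewrite H // a.
Qed.


Theorem theoremB4 (R : realFieldType) (p : R) (hp0 : 0 < p) (hp1 : p <= 1) :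
  yseq p 1 = (2 - p) / p ^+ 2 /\
  (forall n : nat, (1 < n)%N -> n%:R <= p^-1 ->
     yseq p n =
       (\sum_(1 <= i < n) ('C(n, i))%:R * p ^+ i * (1 - p) ^+ (n - i)
            * yseq p (n - i) - 1 + 2 * xseq p n)
       / (1 - (1 - p) ^+ n)).
Proof.
have pn0 : p != 0 by rewrite gt_eqF.
set q := 1 - p.
have q0 : 0 <= q by rewrite subr_ge0.
have q1 : q < 1 by rewrite /q ltrBlDr ltrDl.
have nz k : (0 < k)%N -> 1 - q ^+ k != 0.
  by move=> k0; rewrite subr_eq0 eq_sym lt_eqF // exprn_ilt1 // -lt0n.
split.
  rewrite /yseq big_nat1 /q binn expr1 sqrrN expr1n mulr1 (_ : 1 - (1 - p) = p); last ring.
  rewrite (_ : 1 + (1 - p) = 2 - p); last ring. by rewrite mul1r.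
move=> n n1 _.
set gy := fun k => (1 + q ^+ k) / (1 - q ^+ k) ^+ 2.
set gx := fun k => (1 - q ^+ k)^-1.
have Ey m : yseq p m = S m gy.
  by rewrite /yseq /S; apply: eq_bigr => k _; rewrite /gy /= mulrA.
have Ex : xseq p n = S n gx.
  by rewrite /xseq /S; apply: eq_bigr => k _; rewrite /gx.
have M := mainS p n gy.
rewrite -(big_mkord xpredT (fun i => ('C(n, i))%:R * p ^+ i * (1 - p) ^+ (n - i) * S (n - i) gy)) in M.
rewrite (@big_cat_nat _ _ _ 1) // (@big_cat_nat _ _ _ n 1 n.+1) //= in M; last by apply: ltnW.
have S0 : S 0 gy = 0 by rewrite /S big_geq.
rewrite !big_nat1 subn0 subnn S0 mulr0 addr0 bin0 expr0 mulr1 mul1r -/q -Ey in M.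
have Sum : \sum_(1 <= i < n) ('C(n, i))%:R * p ^+ i * (1 - p) ^+ (n - i) * yseq p (n - i)
   = S n (fun k => q ^+ k * gy k) - q ^+ n * yseq p n.
  rewrite -M addrC addrK; apply: eq_bigr => i _; by rewrite Ey.
have L1 : S n gy - S n (fun k => q ^+ k * gy k) = S n (fun k => gy k - q ^+ k * gy k).
  by rewrite /S -sumrB; apply: eq_bigr => k _; ring.
have L2 : S n (fun k => 2 * gx k - 1) = 2 * S n gx - S n (fun _ => 1).
  by rewrite /S mulr_sumr -sumrB; apply: eq_bigr => k _; ring.
have L3 : S n (fun k => gy k - q ^+ k * gy k) = S n (fun k => 2 * gx k - 1).
  apply: S_ext => k /andP[k1 _].
  have := nz k k1; rewrite /gy /gx; set a := q ^+ k => ha.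
  by field.
rewrite S1 in L2; last by apply: ltnW.
have D : 2 * S n gx = yseq p n - S n (fun k => q ^+ k * gy k) + 1.
  by rewrite Ey L1 L3 L2; ring.
rewrite /q in Sum; rewrite Sum Ex D.
apply: (canRL (mulfK (nz n (ltnW n1)))); ring.
Qed.
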